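(* Let $m\ge 1$. In the checker game on $2m+1$ positions, each of the configurations $O(wb)^m$ and $(wb)^mO$ can be transformed into the configuration $w^mOb^m$ by a sequence of exactly $\frac{m(m+1)}{2}$ legal moves.
   Context: Positions $1,\dots,2m+1$ in a row; a configuration is a word over $\{b,w,O\}$ with exactly one $O$, where $b$ denotes a black checker, $w$ a white checker and $O$ the vacancy; $(wb)^m$ denotes $wb$ repeated $m$ times. A legal move is either a slide (a checker adjacent to the vacancy moves into it) or a jump (a checker at distance two from the vacancy jumps over the checker between them into the vacancy). *)

(* Defs.v *)
From HB Require Import structures.
From mathcomp Require Import all_boot.
Set Implicit Arguments. Unset Strict Implicit. Unset Printing Implicit Defensive.

Inductive cell := B | W | O.

Definition cell_eqb (x y : cell) : bool :=
  match x, y with B, B | W, W | O, O => true | _, _ => false end.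
Lemma cell_eqP : Equality.axiom cell_eqb.
Proof. by case; case; constructor. Qed.
HB.instance Definition _ := hasDecEq.Build cell cell_eqP.

Definition config := seq cell.
Definition valid_config (c : config) : bool := count_mem O c == 1.

(* Move the checker at (0-based) position j into the vacancy at position i. *)
Definition move_to (c : config) (i j : nat) : config :=
  set_nth O (set_nth O c i (nth O c j)) j O.

Definition slide_or_jump (c : config) (i j : nat) : bool :=
  [|| j == i.+1, i == j.+1,
      (j == i.+2) && (nth O c i.+1 != O)
    | (i == j.+2) && (nth O c j.+1 != O)].

Definition legal_move (c c' : config) : Prop :=
  valid_config c /\
  exists i j : nat,
    [/\ (i < size c) && (j < size c), nth O c i = O, nth O c j != O,
        slide_or_jump c i j
      & c' = move_to c i j].

Fixpoint moves (k : nat) (c c' : config) : Prop :=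
  match k with
  | 0 => c = c'
  | k.+1 => exists c1, legal_move c c1 /\ moves k c1 c'
  end.

Definition wb_pow (m : nat) : config := flatten (nseq m [:: W; B]).

(* Main.v *)
Require Import Defs.
From mathcomp Require Import all_boot.
From mathcomp Require Import zify.

Lemma moves_trans a b c1 c2 c3 : moves a c1 c2 -> moves b c2 c3 -> moves (a + b) c1 c3.
Proof.
elim: a c1 => [|a IH] c1 /=; first by move=> ->.
by move=> [c [H1 H2]] H3; exists c; split => //; apply: IH H2 H3.
Qed.

Arguments moves_trans {a b c1 c2 c3}.

Lemma set_nth_catl (p t : config) i y :
  set_nth O (p ++ t) (size p + i) y = p ++ set_nth O t i y.
Proof. by elim: p => //= x p ->. Qed.

Lemma set_nth_catr (c s : config) i y : i < size c ->
  set_nth O (c ++ s) i y = set_nth O c i y ++ s.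
Proof.
elim: c i => // x c IH [|i] //= Hi.
by rewrite IH.
Qed.

Lemma nth_mid (p c s : config) i : i < size c ->
  nth O (p ++ c ++ s) (size p + i) = nth O c i.
Proof. by move=> Hi; elim: p => [|x p IH] //=; rewrite nth_cat Hi. Qed.

Lemma legal_ctx p s c c' : count_mem O p = 0 -> count_mem O s = 0 ->
  legal_move c c' -> legal_move (p ++ c ++ s) (p ++ c' ++ s).
Proof.
move=> Hp Hs [Hv [i [j [/andP [Hi Hj] Hci Hcj Hsj ->]]]].
split.
  by rewrite /valid_config !count_cat Hp Hs add0n addn0.
exists (size p + i), (size p + j); split.
- by rewrite !size_cat !ltn_add2l (leq_trans Hi) ?(leq_trans Hj) // leq_addr.
- by rewrite nth_mid.
- by rewrite nth_mid.
- move: Hsj; rewrite /slide_or_jump -!addnS !eqn_add2l.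
  case/or4P=> [->|->|/andP [H1 H2]|/andP [H1 H2]]; rewrite ?orbT //.
    rewrite (@nth_mid p c s i.+1) ?H2 ?H1 ?orbT //.
    by move/eqP: H1 => H1; rewrite H1 in Hj; apply: ltn_trans Hj.
  rewrite (@nth_mid p c s j.+1) ?H2 ?H1 ?orbT //.
  by move/eqP: H1 => H1; rewrite H1 in Hi; apply: ltn_trans Hi.
- rewrite /move_to nth_mid // (@set_nth_catl p (c ++ s)) (@set_nth_catr c s) //.
  rewrite (@set_nth_catl p) (@set_nth_catr) //.
  by rewrite size_set_nth (leq_trans Hj) // leq_maxr.
Qed.

Lemma moves_ctx p s k c c' : count_mem O p = 0 -> count_mem O s = 0 ->
  moves k c c' -> moves k (p ++ c ++ s) (p ++ c' ++ s).
Proof.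
move=> Hp Hs; elim: k c => [|k IH] c /=; first by move=> ->.
by move=> [c1 [H1 H2]]; exists (p ++ c1 ++ s); split; [apply: legal_ctx | apply: IH].
Qed.

Lemma move1 c c' : legal_move c c' -> moves 1 c c'.
Proof. by move=> H; exists c'. Qed.
Arguments move1 {c c'}.

Arguments legal_ctx {p s c c'}.
Lemma slideR x : x != O -> legal_move [:: O; x] [:: x; O].
Proof. by case: x => // _; split => //; exists 0, 1. Qed.
Lemma slideL x : x != O -> legal_move [:: x; O] [:: O; x].
Proof. by case: x => // _; split => //; exists 1, 0. Qed.
Lemma jumpR x y : x != O -> y != O -> legal_move [:: O; y; x] [:: x; y; O].
Proof. by case: x => // _; case: y => // _; split => //; exists 0, 2. Qed.
Lemma jumpL x y : x != O -> y != O -> legal_move [:: x; y; O] [:: O; y; x].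
Proof. by case: x => // _; case: y => // _; split => //; exists 2, 0. Qed.

Lemma wbS j : wb_pow j.+1 = wb_pow j ++ [:: W; B].
Proof. by elim: j => //= j IH; rewrite -IH. Qed.

Lemma cnt_wb j : count_mem O (wb_pow j) = 0.
Proof. by elim: j. Qed.

Lemma cnt_nseq n x : x != O -> count_mem O (nseq n x) = 0.
Proof. by move=> Hx; elim: n => //= n ->; case: x Hx. Qed.

Lemma jumpsR n j : moves n (W :: wb_pow j ++ O :: B :: wb_pow n)
                           (W :: wb_pow (j + n) ++ [:: O; B]).
Proof.
elim: n j => [|n IH] j; first by rewrite addn0.
have H := @moves_ctx (W :: wb_pow j) (B :: wb_pow n) _ _ _
   (cnt_wb j) (cnt_wb n) (move1 (@jumpR W B erefl erefl)).
rewrite -(add1n n); apply: moves_trans H _.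
have := IH j.+1; rewrite addSnnS wbS -!catA /=; apply.
Qed.

Lemma jumpsL n j : moves n (wb_pow n ++ W :: O :: wb_pow j ++ [:: B])
                           (W :: O :: wb_pow (n + j) ++ [:: B]).
Proof.
elim: n j => [|n IH] j //.
have H := @moves_ctx (wb_pow n ++ [:: W]) (wb_pow j ++ [:: B]) _ _ _
   _ _ (move1 (@jumpL B W erefl erefl)).
rewrite -(add1n n); apply: moves_trans.
  rewrite wbS -!catA in H *; apply: H.
  - by rewrite count_cat cnt_wb.
  - by rewrite count_cat cnt_wb.
rewrite -catA; have := IH j.+1; rewrite -addSnnS; apply.
Qed.

Lemma tri m : (m.+1 * m.+2) %/ 2 = 1 + m + (m * m.+1) %/ 2.
Proof.
have -> : m.+1 * m.+2 = m * m.+1 + 2 * m.+1 by rewrite mulnC mulnS mulnC; lia.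
by rewrite divnDr ?dvdn_mulr // mulKn // addnC add1n.
Qed.

Lemma nseqS_r n (x : cell) : nseq n.+1 x = nseq n x ++ [:: x].
Proof. by elim: n => //= n <-. Qed.

Lemma both m :
  moves ((m * m.+1) %/ 2) (O :: wb_pow m) (nseq m W ++ O :: nseq m B) /\
  moves ((m * m.+1) %/ 2) (wb_pow m ++ [:: O]) (nseq m W ++ O :: nseq m B).
Proof.
elim: m => [|m [IHP IHQ]]; first by [].
have Ctx : forall k c c', moves k c c' ->
   moves k (W :: c ++ [:: B]) (W :: c' ++ [:: B]).
  by move=> k c c' H; apply: (@moves_ctx [:: W] [:: B] _ _ _).
have Tgt : W :: (nseq m W ++ O :: nseq m B) ++ [:: B] = nseq m.+1 W ++ O :: nseq m.+1 B.
  by rewrite (nseqS_r m B) -catA.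
rewrite tri; split.
- have H1 := @moves_ctx [::] (B :: wb_pow m) 1 [:: O; W] [:: W; O]
     erefl (cnt_wb m) (move1 (@slideR W erefl)).
  apply: (moves_trans H1).
  apply: moves_trans; first exact: (jumpsR m 0).
  rewrite -Tgt add0n -[[:: O; B]]/([:: O] ++ [:: B]) catA; exact: Ctx IHQ.
- have H2 := @moves_ctx (wb_pow m ++ [:: W]) [::] 1 [:: B; O] [:: O; B]
     _ erefl (move1 (@slideL B erefl)).
  have H3 : moves (1 + m) (wb_pow m ++ [:: W; B] ++ [:: O]) (W :: O :: wb_pow m ++ [:: B]).
    apply: moves_trans.
      have := H2; rewrite -!catA; apply.
      by rewrite count_cat cnt_wb.
    have := jumpsL m 0; rewrite addn0; apply.
  rewrite wbS -catA; apply: (moves_trans H3).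
  rewrite -Tgt; exact: Ctx IHP.
Qed.

Theorem lemma3 (m : nat) : 1 <= m ->
  moves ((m * m.+1) %/ 2) (O :: wb_pow m) (nseq m W ++ O :: nseq m B) /\
  moves ((m * m.+1) %/ 2) (wb_pow m ++ [:: O]) (nseq m W ++ O :: nseq m B).
Proof. by move=> _; apply: both. Qed.
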